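(* Let $\Omega\subseteq\mathbb{R}^n$ be open, let $D$ be a dense subset of $\Omega$, and let $f:D\to\mathbb{R}$ be continuous on $D$. Then (i) $F(D,\Omega,f)(x)=f(x)$ for all $x\in D$, and (ii) $F(D,\Omega,f)$ is H-continuous.
   Context: $\overline{\mathbb{R}}=\mathbb{R}\cup\{\pm\infty\}$, $\mathbb{I}\overline{\mathbb{R}}$ is the set of closed intervals $[\underline a,\overline a]$ with $\underline a\le\overline a$ in $\overline{\mathbb{R}}$, $a\in\overline{\mathbb{R}}$ identified with $[a,a]$. $\mathbb{A}(X)$ is the set of functions $X\to\mathbb{I}\overline{\mathbb{R}}$. $B_\delta(x)=\{y\in\Omega:\|x-y\|<\delta\}$. For dense $D\subseteq\Omega$ and $f\in\mathbb{A}(D)$: $I(D,\Omega,f)(x)=\sup_{\delta>0}\inf\{z\in f(y):y\in B_\delta(x)\cap D\}$, $S(D,\Omega,f)(x)=\inf_{\delta>0}\sup\{z\in f(y):y\in B_\delta(x)\cap D\}$, $F(D,\Omega,f)(x)=[I(D,\Omega,f)(x),S(D,\Omega,f)(x)]$ for $x\in\Omega$; $F(f)=F(\Omega,\Omega,f)$. A function $h\in\mathbb{A}(\Omega)$ is H-continuous if for every $g\in\mathbb{A}(\Omega)$ with $g(x)\subseteq h(x)$ for all $x\in\Omega$ one has $F(g)=h$. *)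

(* Defs.v *)
From HB Require Import structures.
From mathcomp Require Import all_boot all_order all_algebra.
From mathcomp Require Import all_classical all_reals all_analysis.
Set Implicit Arguments. Unset Strict Implicit. Unset Printing Implicit Defensive.
Import Order.TTheory GRing.Theory Num.Theory.
Import numFieldNormedType.Exports.
Local Open Scope classical_set_scope.
Local Open Scope ring_scope.

(* Points of R^n are row vectors 'rV[R]_n with the library (sup) norm. *)
(* An element of I(\bar R): a pair (lower, upper) of extended reals.    *)
Definition ival (R : realType) := (\bar R * \bar R)%type.

Definition is_ival (R : realType) (p : ival R) : Prop := (p.1 <= p.2)%E.

Definition in_ival (R : realType) (p : ival R) (z : \bar R) : Prop :=
  (p.1 <= z)%E /\ (z <= p.2)%E.

Definition sub_ival (R : realType) (p q : ival R) : Prop :=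
  forall z, in_ival p z -> in_ival q z.

Definition Bd (R : realType) (n : nat) (Om : set 'rV[R]_n) (x : 'rV[R]_n)
  (d : R) : set 'rV[R]_n := [set y | Om y /\ `|x - y| < d].

Definition vals (R : realType) (n : nat) (D Om : set 'rV[R]_n)
  (f : 'rV[R]_n -> ival R) (x : 'rV[R]_n) (d : R) : set (\bar R) :=
  [set z | exists y, (Bd Om x d `&` D) y /\ in_ival (f y) z].

Definition Ifun (R : realType) (n : nat) (D Om : set 'rV[R]_n)
  (f : 'rV[R]_n -> ival R) (x : 'rV[R]_n) : \bar R :=
  ereal_sup [set ereal_inf (vals D Om f x d) | d in [set d : R | 0 < d]].

Definition Sfun (R : realType) (n : nat) (D Om : set 'rV[R]_n)
  (f : 'rV[R]_n -> ival R) (x : 'rV[R]_n) : \bar R :=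
  ereal_inf [set ereal_sup (vals D Om f x d) | d in [set d : R | 0 < d]].

Definition Ffun (R : realType) (n : nat) (D Om : set 'rV[R]_n)
  (f : 'rV[R]_n -> ival R) (x : 'rV[R]_n) : ival R :=
  (Ifun D Om f x, Sfun D Om f x).

Definition Hcont (R : realType) (n : nat) (Om : set 'rV[R]_n)
  (h : 'rV[R]_n -> ival R) : Prop :=
  (forall x, Om x -> is_ival (h x)) /\
  forall g : 'rV[R]_n -> ival R,
    (forall x, Om x -> is_ival (g x)) ->
    (forall x, Om x -> sub_ival (g x) (h x)) ->
    forall x, Om x -> Ffun Om Om g x = h x.

Definition ptval (R : realType) (n : nat) (f : 'rV[R]_n -> R) :
  'rV[R]_n -> ival R := fun y => ((f y)%:E, (f y)%:E).

(* Main.v *)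
Require Import Defs.
From HB Require Import structures.
From mathcomp Require Import all_boot all_order all_algebra.
From mathcomp Require Import all_classical all_reals all_analysis.
From mathcomp Require Import lra.
Import Order.TTheory GRing.Theory Num.Theory.
Import numFieldNormedType.Exports.
Local Open Scope classical_set_scope.
Local Open Scope ring_scope.

Lemma nbhs_rV (R : realType) (n : nat) (x : 'rV[R]_n) (P : set 'rV[R]_n) :
  nbhs x P -> exists2 d : R, 0 < d & forall y, `|x - y| < d -> P y.
Proof.
move=> /nbhs_normP [d d0 Hd]; exists d => // y Hy; exact: Hd.
Qed.

Lemma cont_ed (R : realType) (n : nat) (D : set 'rV[R]_n) (f : 'rV[R]_n -> R) x :
  {within D, continuous f} -> D x -> forall e : R, 0 < e ->
  exists2 d : R, 0 < d & forall y, D y -> `|x - y| < d -> `|f x - f y| < e.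
Proof.
rewrite continuous_subspace_in => H Dx e e0.
have := H x; rewrite inE => /(_ Dx).
move=> /cvgrPdist_lt /(_ e e0) /(nbhs_subspace_ex _ Dx) [V /nbhs_rV [d d0 Hd] EV].
exists d => // y Dy xy.
have : (V `&` D) y by split => //; exact: Hd.
by rewrite -EV => -[].
Qed.

Lemma clos_ed (R : realType) (n : nat) (D : set 'rV[R]_n) x :
  closure D x -> forall d : R, 0 < d -> exists y, D y /\ `|x - y| < d.
Proof.
rewrite closureEnbhs /= meets_globallyl => H d d0.
have : nbhs x (ball x d) by exact: nbhsx_ballx.
move=> hb; have [y [Dy]] := H _ hb.
rewrite -ball_normE /= => xy; by exists y.
Qed.

Arguments cont_ed {R n D f x}.
Arguments clos_ed {R n D x}.

Section S.
Context (R : realType) (n : nat).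
Implicit Types (Om D : set 'rV[R]_n) (g : 'rV[R]_n -> ival R).

Lemma vals_mono D Om g x y (d d' : R) : `|x - y| + d' <= d ->
  vals D Om g y d' `<=` vals D Om g x d.
Proof.
move=> hd z [y' [[[Om' hy'] Dy'] hz]]; exists y'; split => //; split => //; split => //.
by apply: (le_lt_trans (ler_distD y x y')); apply: lt_le_trans hd; rewrite ltrD2l.
Qed.

Lemma J_le_I D Om g x (d : R) : 0 < d ->
  (ereal_inf (vals D Om g x d) <= Ifun D Om g x)%E.
Proof. by move=> d0; apply: ereal_sup_ubound; exists d. Qed.

Lemma S_le_K D Om g x (d : R) : 0 < d ->
  (Sfun D Om g x <= ereal_sup (vals D Om g x d))%E.
Proof. by move=> d0; apply: ereal_inf_lbound; exists d. Qed.

Lemma vals_pt D Om (f : 'rV[R]_n -> R) x d z :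
  vals D Om (ptval f) x d z -> exists y, [/\ Om y, `|x - y| < d, D y & z = (f y)%:E].
Proof.
move=> [y [[[Omy xy] Dy] [h1 h2]]]; exists y; split => //.
by apply/esym/le_anti; rewrite h1 h2.
Qed.

Lemma pt_vals D Om (f : 'rV[R]_n -> R) x d y :
  Om y -> `|x - y| < d -> D y -> vals D Om (ptval f) x d (f y)%:E.
Proof. by move=> Omy xy Dy; exists y; split => //; split. Qed.

Lemma part1 D Om (f : 'rV[R]_n -> R) x :
  D `<=` Om -> {within D, continuous f} -> D x ->
  Ifun D Om (ptval f) x = (f x)%:E /\ Sfun D Om (ptval f) x = (f x)%:E.
Proof.
move=> DOm fc Dx; have Omx := DOm _ Dx.
have xx d : 0 < d -> vals D Om (ptval f) x d (f x)%:E.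
  by move=> d0; apply: pt_vals => //; rewrite subrr normr0.
split; apply: le_anti; apply/andP; split.
- apply: ge_ereal_sup => _ [d d0 <-]; apply: ereal_inf_lbound; exact: xx.
- apply/lee_subgt0Pr => e e0.
  have [d d0 Hd] := cont_ed fc Dx e e0.
  apply: le_trans (J_le_I _ _ _ _ _ d0).
  apply: le_ereal_inf_tmp => z /vals_pt [y [Omy xy Dy ->]].
  rewrite -EFinB lee_fin lerBlDr -lerBlDl.
  have := Hd y Dy xy; rewrite ltr_norml => /andP[_ /ltW].
  move=> ?; lra.
- apply/lee_addgt0Pr => e e0.
  have [d d0 Hd] := cont_ed fc Dx e e0.
  apply: le_trans (S_le_K _ _ _ _ _ d0) _.
  apply: ge_ereal_sup => z /vals_pt [y [Omy xy Dy ->]].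
  rewrite -EFinD lee_fin.
  have := Hd y Dy xy; rewrite ltr_norml => /andP[/ltW + _].
  move=> ?; lra.
- apply: le_ereal_inf_tmp => _ [d d0 <-]; apply: ereal_sup_ubound; exact: xx.
Qed.


Lemma h_ival D Om (f : 'rV[R]_n -> R) x :
  D `<=` Om -> Om `<=` closure D -> Om x ->
  is_ival (Ffun D Om (ptval f) x).
Proof.
move=> DOm OmD Omx; rewrite /is_ival /=.
apply: ge_ereal_sup => _ [d d0 <-]; apply: le_ereal_inf_tmp => _ [d' d'0 <-].
have md : 0 < Order.min d d' by rewrite lt_min; apply/andP.
have [y [Dy xy]] := clos_ed (OmD _ Omx) (Order.min d d') md.
rewrite lt_min in xy; case/andP: xy => xy1 xy2.
apply: (@le_trans _ _ (f y)%:E).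
  by apply: ereal_inf_lbound; apply: pt_vals => //; exact: DOm.
by apply: ereal_sup_ubound; apply: pt_vals => //; exact: DOm.
Qed.

Lemma part2 D Om (f : 'rV[R]_n -> R) :
  D `<=` Om -> Om `<=` closure D -> {within D, continuous f} ->
  Hcont Om (Ffun D Om (ptval f)).
Proof.
move=> DOm OmD fc; split; first by move=> x; exact: h_ival.
move=> g hg sg x Omx.
have gl y : Om y -> in_ival (g y) (g y).1 by move=> Omy; split => //; exact: hg.
have gr y : Om y -> in_ival (g y) (g y).2 by move=> Omy; split => //; exact: hg.
have ID y : D y -> ((g y).1 <= (f y)%:E)%E.
  move=> Dy; have [_ +] := sg y (DOm _ Dy) _ (gl y (DOm _ Dy)).
  by rewrite /Ffun /= (part1 _ _ _ _ DOm fc Dy).2.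
have SD y : D y -> ((f y)%:E <= (g y).2)%E.
  move=> Dy; have [+ _] := sg y (DOm _ Dy) _ (gr y (DOm _ Dy)).
  by rewrite /Ffun /= (part1 _ _ _ _ DOm fc Dy).1.
have IO y : Om y -> (Ifun D Om (ptval f) y <= (g y).1)%E.
  by move=> Omy; have [+ _] := sg y Omy _ (gl y Omy).
have SO y : Om y -> ((g y).2 <= Sfun D Om (ptval f) y)%E.
  by move=> Omy; have [_ +] := sg y Omy _ (gr y Omy).
rewrite /Ffun; congr (_, _); apply: le_anti; apply/andP; split.
- apply: ge_ereal_sup => _ [d d0 <-]; apply: le_trans (J_le_I _ _ _ _ _ d0).
  apply: le_ereal_inf_tmp => z /vals_pt [y [Omy xy Dy ->]].
  apply: ge_ereal_inf; exists (g y).1; last exact: ID.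
  by exists y; split => //; exact: gl.
- apply: ge_ereal_sup => _ [d d0 <-]; apply: le_trans (J_le_I Om Om g x _ d0).
  apply: le_ereal_inf_tmp => z [y [[[Omy xy] _] [hz1 hz2]]].
  apply: le_trans hz1; apply: le_trans (IO y Omy).
  have d'0 : 0 < d - `|x - y| by rewrite subr_gt0.
  apply: le_trans (J_le_I D Om (ptval f) y _ d'0).
  apply: ereal_inf_le_tmp; apply: vals_mono.
  by rewrite [leLHS]addrC subrK.
- apply: le_ereal_inf_tmp => _ [d d0 <-]; apply: le_trans (S_le_K Om Om g x _ d0) _.
  apply: ge_ereal_sup => z [y [[[Omy xy] _] [hz1 hz2]]].
  apply: le_trans hz2 _; apply: le_trans (SO y Omy) _.
  have d'0 : 0 < d - `|x - y| by rewrite subr_gt0.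
  apply: le_trans (S_le_K D Om (ptval f) y _ d'0) _.
  apply: ereal_sup_le; apply: vals_mono.
  by rewrite [leLHS]addrC subrK.
- apply: le_ereal_inf_tmp => _ [d d0 <-]; apply: le_trans (S_le_K _ _ _ _ _ d0) _.
  apply: ge_ereal_sup => z /vals_pt [y [Omy xy Dy ->]].
  apply: le_ereal_sup_tmp; exists (g y).2; last exact: SD.
  by exists y; split => //; exact: gr.
Qed.

End S.

Theorem theorem7 (R : realType) (n : nat) (Om D : set 'rV[R]_n)
  (f : 'rV[R]_n -> R) :
  open Om -> D `<=` Om -> Om `<=` closure D ->
  {within D, continuous f} ->
  (forall x, D x -> Ffun D Om (ptval f) x = ((f x)%:E, (f x)%:E)) /\
  Hcont Om (Ffun D Om (ptval f)).
Proof.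
move=> _ DOm OmD fc; split; last exact: part2.
move=> x Dx; have [h1 h2] := @part1 _ _ _ _ _ _ DOm fc Dx.
by rewrite /Ffun h1 h2.
Qed.
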